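(* Let $\{M_p\mid p\in P\}$ be a Morse decomposition of a multivector field on a finite simplicial complex $K$, and let $\sigma_1,\dots,\sigma_n$ and $\sigma'_1,\dots,\sigma'_n$ be two admissible enumerations of $K$ which are Morse fixed, i.e. for every $p\in P$ the orders they induce on $M_p$ coincide. Let $A$ and $A'$ be the corresponding filtered boundary matrices and $A_{out}$, $A'_{out}$ the matrices produced by the reduction phase of ConMat on $A$ and $A'$. Then $A_{out}[i,j]=A'_{out}[i',j']$ whenever $\sigma_i=\sigma'_{i'}$ and $\sigma_j=\sigma'_{j'}$. Furthermore, if $j$ is a homogeneous column of $A_{out}$ with pivot row $\ell$, and $\sigma'_{j'}=\sigma_j$, $\sigma'_{\ell'}=\sigma_\ell$, then $j'$ is a homogeneous column of $A'_{out}$ with pivot row $\ell'$.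
   Context: $K$ is a finite simplicial complex ($\tau\le\sigma$: $\tau$ is a face of $\sigma$; $\mathrm{cl}(\sigma)=\{\tau:\tau\le\sigma\}$). A multivector field $\mathcal V$ on $K$ is a partition of $K$ into convex sets $V$ (if $\sigma,\tau\in V$ and $\sigma\le\mu\le\tau$ then $\mu\in V$); $[\sigma]_{\mathcal V}$ is the part containing $\sigma$, $F_{\mathcal V}(\sigma)=[\sigma]_{\mathcal V}\cup\mathrm{cl}(\sigma)$, and a path is a sequence $\sigma_1,\dots,\sigma_r$ with $\sigma_k\in F_{\mathcal V}(\sigma_{k-1})$. A Morse decomposition indexed by a finite poset $(P,\le_P)$ is a partition $K=\bigsqcup_{p\in P}M_p$ such that every path from $M_p$ to $M_q$ has $q\le_P p$; $[\sigma]_P$ is the $p$ with $\sigma\in M_p$. An admissible enumeration is $\sigma_1,\dots,\sigma_n$ of all simplices of $K$ such that (a) for some linear extension $\le_{lin}$ of $\le_P$, $i\le j\Rightarrow[\sigma_i]_P\le_{lin}[\sigma_j]_P$; (b) if $\sigma_i$ is a proper face of $\sigma_j$ then $i<j$. Different admissible enumerations may use different linear extensions. The filtered boundary matrix is the $n\times n$ $\mathbb Z_2$-matrix with entry $(i,j)$ equal to $1$ iff $\sigma_i$ is a codimension-one face of $\sigma_j$; row/column $i$ represents $\sigma_i$. For a nonzero column $j$ of a matrix $B$, its pivot row $\mathrm{low}_B(j)$ is the largest $i$ with $B[i,j]=1$; column $j$ is homogeneous if nonzero and $\sigma_j$, $\sigma_{\mathrm{low}_B(j)}$ are in the same Morse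 set. ConMat reduction phase on $A$ (in place): for $j=1,\dots,n$: for $i=\mathrm{low}_A(j)$ down to $1$: if $A[i,j]=1$ and some column $s<j$ of the current matrix is homogeneous with $\mathrm{low}_A(s)=i$, add column $s$ to column $j$ (mod 2). The result is $A_{out}$. *)

(* Defs.v *)
From mathcomp Require Import all_boot all_order.
Set Implicit Arguments. Unset Strict Implicit. Unset Printing Implicit Defensive.
Import Order.TTheory.
Local Open Scope order_scope.

Section Complex.
Variable V : finType.
Implicit Types (K : {set {set V}}) (sigma tau : {set V}).

Definition simplicial_complex K : Prop :=
  set0 \notin K /\
  (forall sigma tau, sigma \in K -> tau != set0 -> tau \subset sigma -> tau \in K).

Definition cl K sigma : {set {set V}} := [set tau in K | tau \subset sigma].

Definition codim1_face sigma tau : bool :=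
  (tau \subset sigma) && (#|sigma| == #|tau|.+1).

Definition convex K (A : {set {set V}}) : Prop :=
  forall sigma tau mu, sigma \in A -> tau \in A -> mu \in K ->
    sigma \subset mu -> mu \subset tau -> mu \in A.

Definition multivector_field K (Vs : {set {set {set V}}}) : Prop :=
  partition Vs K /\ forall A, A \in Vs -> convex K A.

Definition Fmv K (Vs : {set {set {set V}}}) sigma : {set {set V}} :=
  pblock Vs sigma :|: cl K sigma.

Definition mv_path K Vs (x : {set V}) (s : seq {set V}) : bool :=
  (x \in K) && path (fun a b => b \in Fmv K Vs a) x s.

(** Morse decomposition indexed by the finite poset P: the Morse set of
    sigma is [sigma]_P = m sigma, i.e. M_p = [set sigma in K | m sigma == p]. *)
Definition morse_decomposition (d : Order.disp_t) (P : finPOrderType d)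
    K Vs (m : {set V} -> P) : Prop :=
  forall x s, mv_path K Vs x s -> m (last x s) <= m x.

Definition linear_extension (d : Order.disp_t) (P : finPOrderType d)
    (le : rel P) : Prop :=
  reflexive le /\ antisymmetric le /\ transitive le /\ total le /\
  (forall p q : P, p <= q -> le p q).

Definition enumeration K (s : seq {set V}) : Prop :=
  uniq s /\ [set x in s] = K.

Definition admissible (d : Order.disp_t) (P : finPOrderType d) K
    (m : {set V} -> P) (s : seq {set V}) : Prop :=
  enumeration K s /\
  (exists le : rel P, linear_extension le /\
     forall i j, i < size s -> j < size s -> (i <= j)%N ->
       le (m (nth set0 s i)) (m (nth set0 s j))) /\
  (forall i j, i < size s -> j < size s ->
     nth set0 s i \proper nth set0 s j -> (i < j)%N).

Definition morse_fixed (d : Order.disp_t) (P : finPOrderType d) K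
    (m : {set V} -> P) (s s' : seq {set V}) : Prop :=
  forall sigma tau, sigma \in K -> tau \in K -> m sigma = m tau ->
    (index sigma s < index tau s)%N = (index sigma s' < index tau s')%N.

(** * Z_2 matrices: entries are booleans (true = 1), addition is xor.
    Rows/columns are indexed 0 .. n-1 (0-based version of 1 .. n). *)
Definition mat := nat -> nat -> bool.

Definition boundary_matrix (s : seq {set V}) : mat :=
  fun i j => [&& (i < size s)%N, (j < size s)%N &
              codim1_face (nth set0 s j) (nth set0 s i)].

Variable n : nat.

Definition nonzero_col (M : mat) j : bool := [exists i : 'I_n, M i j].

(** pivot row: largest i with M[i,j] = 1 (meaningful for nonzero columns) *)
Definition low (M : mat) j : nat := \max_(i < n | M i j) i.

Variables (d : Order.disp_t) (P : finPOrderType d) (m : {set V} -> P)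
          (s : seq {set V}).

Definition homogeneous (M : mat) j : bool :=
  nonzero_col M j && (m (nth set0 s j) == m (nth set0 s (low M j))).

Definition addcol (M : mat) (src j : nat) : mat :=
  fun r c => if c == j then xorb (M r j) (M r src) else M r c.

Definition pivcol (M : mat) j i : option nat :=
  let k := find (fun c => homogeneous M c && (low M c == i)) (iota 0 j) in
  if (k < j)%N then Some k else None.

Definition red_step (M : mat) j i : mat :=
  if M i j then
    match pivcol M j i with Some c => addcol M c j | None => M end
  else M.

Fixpoint red_inner (M : mat) j k : mat :=
  match k with
  | 0 => M
  | k'.+1 => red_inner (red_step M j k') j k'
  end.

Fixpoint red_outer (M : mat) j : mat :=
  match j with
  | 0 => M
  | j'.+1 =>
      let M1 := red_outer M j' in
      red_inner M1 j' (if nonzero_col M1 j' then (low M1 j').+1 else 0)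
  end.

Definition conmat_reduce (A : mat) : mat := red_outer A n.

End Complex.

(* Main.v *)
Require Import Defs.
From mathcomp Require Import all_boot all_order.
Set Implicit Arguments. Unset Strict Implicit. Unset Printing Implicit Defensive.
Import Order.TTheory.

Section Low.
Variable n : nat.

Lemma low_max (M : mat) j i : M i j -> i < n -> i <= low n M j.
Proof.
move=> Hij Hin; rewrite /low.
exact: (@leq_bigmax_cond _ (fun k : 'I_n => M k j) (fun k : 'I_n => nat_of_ord k) (Ordinal Hin)).
Qed.

Lemma nonzeroP (M : mat) j i : M i j -> i < n -> nonzero_col n M j.
Proof. by move=> Hij Hin; apply/existsP; exists (Ordinal Hin). Qed.

Lemma low_mem (M : mat) j : nonzero_col n M j -> M (low n M j) j /\ low n M j < n.
Proof.
case/existsP=> i0 Hi0; rewrite /low.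
have [|i Hi ->] := @eq_bigmax_cond _ (fun k : 'I_n => M k j) (fun k : 'I_n => nat_of_ord k).
  by apply/card_gt0P; exists i0.
by split.
Qed.

Lemma low_above (M : mat) j i : nonzero_col n M j -> low n M j < i -> i < n -> M i j = false.
Proof. by move=> _ Hl Hi; apply/negP => Hij; have := low_max Hij Hi; rewrite leqNgt Hl. Qed.

End Low.

Section Run.
Variables (V : finType) (d : Order.disp_t) (P : finPOrderType d) (m : {set V} -> P)
  (n : nat) (s : seq {set V}).

Definition Inv (M : mat) := forall i j, M i j ->
  [/\ i < n, j < n & (m (nth set0 s i) <= m (nth set0 s j))%O].

Local Notation hom := (homogeneous n m s).
Local Notation lw := (low n).

Definition sumc (M : mat) (T : seq nat) i := \big[addb/false]_(c <- T) M i c.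

Lemma hom_ext (M N : mat) c : (forall i, M i c = N i c) -> hom M c = hom N c /\ lw M c = lw N c.
Proof.
move=> H.
have El : lw M c = lw N c by rewrite /low; apply: eq_bigl => i; rewrite H.
have En : nonzero_col n M c = nonzero_col n N c by apply: eq_existsb => i; rewrite H.
by rewrite /homogeneous En El.
Qed.

Lemma pivcol_some M j i c : pivcol n m s M j i = Some c -> [/\ c < j, hom M c & lw M c = i].
Proof.
rewrite /pivcol; set p := (fun c => _); case: ifP => // Hlt [<-].
have Hh : has p (iota 0 j) by rewrite has_find size_iota.
have := nth_find 0 Hh; rewrite nth_iota // add0n /p => /andP [-> /eqP ->]; done.
Qed.

Lemma pivcol_none M j i : pivcol n m s M j i = None -> forall c, c < j -> hom M c -> lw M c <> i.
Proof.
rewrite /pivcol; set p := (fun c => _); case: ifP => // Hlt _ c Hc Hh Hl.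
have : has p (iota 0 j).
  by apply/hasP; exists c; [rewrite mem_iota | rewrite /p Hh Hl eqxx].
by rewrite has_find size_iota Hlt.
Qed.

Lemma red_inner_other M j k i c : c != j -> red_inner n m s M j k i c = M i c.
Proof.
elim: k M => [|k IH] M Hc //=; rewrite IH // /red_step.
case: (M k j) => //; case: pivcol => // c0; by rewrite /addcol (negbTE Hc).
Qed.

Lemma outer_other A j i c : j <= c -> red_outer n m s A j i c = A i c.
Proof.
elim: j => [|j IH] Hc //=; rewrite red_inner_other ?IH //; first exact: ltnW.
by rewrite neq_ltn Hc orbT.
Qed.

Lemma outer_stable A j j' i c : j <= j' -> c < j -> red_outer n m s A j' i c = red_outer n m s A j i c.
Proof.
elim: j' => [|j' IH] Hj Hc; first by rewrite leqn0 in Hj; rewrite (eqP Hj).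
case: (ltnP j j'.+1) Hj => [Hlt _|Hge Hj]; last by have -> : j = j'.+1 by apply/eqP; rewrite eqn_leq Hj Hge.
rewrite /= red_inner_other ?IH //; last by rewrite neq_ltn (leq_trans Hc Hlt).
Qed.

Definition InnerInv M0 j k M :=
  [/\ forall i c, c != j -> M i c = M0 i c,
      Inv M,
      exists T, (forall c, c \in T -> [/\ c < j, hom M0 c & (m (nth set0 s c) <= m (nth set0 s j))%O])
        /\ forall i, M i j = M0 i j (+) sumc M0 T i
    & forall c, c < j -> hom M0 c -> k <= lw M0 c -> M (lw M0 c) j = false].

Lemma inner_step M0 j k M : InnerInv M0 j k.+1 M -> InnerInv M0 j k (red_step n m s M j k).
Proof.
case=> Hoth HI [T [HT HTs]] Hdone.
have Hcol : forall c, c < j -> hom M c = hom M0 c /\ lw M c = lw M0 c.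
  by move=> c Hc; apply: hom_ext => i; apply: Hoth; rewrite neq_ltn Hc.
rewrite /red_step; case Hkj: (M k j); last first.
  split=> //; first by exists T.
  move=> c Hc Hh; rewrite leq_eqVlt => /orP [/eqP <- //|]; exact: Hdone.
case Hpc: pivcol => [c|]; last first.
  split=> //; first by exists T.
  move=> c2 Hc2 Hh; rewrite leq_eqVlt => /orP [/eqP Hl|]; last exact: Hdone.
  have [Hh' Hl'] := Hcol _ Hc2; rewrite -Hh' in Hh.
  by have := pivcol_none Hpc Hc2 Hh; rewrite Hl' Hl.
have [Hcj Hhc Hlc] := pivcol_some Hpc.
have [Hh0 Hl0] := Hcol _ Hcj.
have Hcne : c != j by rewrite neq_ltn Hcj.
have [Hckk Hkn] : M k c /\ k < n by rewrite -Hlc; apply: low_mem; case/andP: Hhc.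
have Hmc : m (nth set0 s c) = m (nth set0 s k) by rewrite -Hlc; case/andP: Hhc => _ /eqP.
have [_ Hjn Hmkj] := HI _ _ Hkj.
split.
- by move=> i c2 Hc2; rewrite /addcol (negbTE Hc2); exact: Hoth.
- move=> i c2; rewrite /addcol; case: eqP => [->|_]; last exact: HI.
  case Hij: (M i j) => /=; first by move=> _; exact: HI.
  rewrite -/(is_true _) => /HI [Hi Hc Hm]; split => //.
  by apply: (le_trans Hm); rewrite Hmc.
- exists (c :: T); split.
    move=> c2; rewrite inE => /orP [/eqP ->|]; last exact: HT.
    by split => //; [rewrite -Hh0 | rewrite Hmc].
  move=> i; rewrite /addcol eqxx HTs /sumc big_cons (Hoth i c Hcne).
  set S := \big[_/_]_(_ <- _) _.
  by case: (M0 i j); case: (M0 i c); case: S.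
- move=> c2 Hc2 Hh2; rewrite leq_eqVlt => /orP [/eqP Hl|Hlt].
    by rewrite -Hl /addcol eqxx Hkj Hckk.
  rewrite /addcol eqxx Hdone // Hoth //.
  have [_ Hl2n] : M0 (lw M0 c2) c2 /\ lw M0 c2 < n by apply: low_mem; case/andP: Hh2.
  rewrite (@low_above n M0 c (lw M0 c2)) //; first by rewrite Hh0 in Hhc; case/andP: Hhc.
  by rewrite -Hl0 Hlc.
Qed.

Lemma inner_all M0 j k M : InnerInv M0 j k M -> InnerInv M0 j 0 (red_inner n m s M j k).
Proof. by elim: k M => [|k IH] M H //=; apply: IH; apply: inner_step. Qed.

Lemma inner_init M0 j : Inv M0 ->
  InnerInv M0 j (if nonzero_col n M0 j then (lw M0 j).+1 else 0) M0.
Proof.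
move=> HI; split => //.
  by exists [::]; split => // i; rewrite /sumc big_nil addbF.
move=> c Hc Hh; have [_ Hln] : M0 (lw M0 c) c /\ lw M0 c < n by apply: low_mem; case/andP: Hh.
case: ifP => Hnz Hle.
  exact: (@low_above n M0 j (lw M0 c)).

apply/negP => Hm; by rewrite (nonzeroP Hm Hln) in Hnz.
Qed.


Section Final.
Variable A : mat.
Hypothesis HA : Inv A.
Local Notation R := (red_outer n m s A n).

Lemma outer_inv j : Inv (red_outer n m s A j).
Proof.
elim: j => [|j IH] //=.
by have [] := inner_all (inner_init j IH).
Qed.

Lemma final_inv : Inv R.
Proof. exact: outer_inv. Qed.

Lemma final_props j : j < n ->
  (exists T, (forall c, c \in T -> [/\ c < j, hom R c & (m (nth set0 s c) <= m (nth set0 s j))%O])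
        /\ forall i, R i j = A i j (+) sumc R T i) /\
  (forall c, c < j -> hom R c -> R (lw R c) j = false).
Proof.
move=> Hjn.
set Mj := red_outer n m s A j.
have Hst : forall c, c < j -> forall i, R i c = Mj i c.
  by move=> c Hc i; rewrite (outer_stable A i (ltnW Hjn) Hc).
have HR : forall i, R i j = red_outer n m s A j.+1 i j.
  by move=> i; rewrite (outer_stable A i Hjn (ltnSn j)).
have [_ _ [T [HT HTs]] Hdone] := inner_all (inner_init j (@outer_inv j)).
have Hh : forall c, c < j -> hom R c = hom Mj c /\ lw R c = lw Mj c.
  by move=> c Hc; apply: hom_ext; exact: Hst.
split.
  exists T; split.
    move=> c Hc; have [Hcj Hhc Hm] := HT c Hc; split => //.
    by have [-> _] := Hh c Hcj.
  move=> i; rewrite HR /= HTs outer_other //; congr addb.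
  rewrite /sumc big_seq_cond [RHS]big_seq_cond; apply: eq_bigr => c /andP [Hc _].
  by rewrite Hst //; case: (HT c Hc).
move=> c Hc Hhc; have [Hh1 Hl1] := Hh c Hc.
by rewrite HR /= Hl1 Hdone // -Hh1.
Qed.

Lemma final_distinct c1 c2 : hom R c1 -> hom R c2 -> lw R c1 = lw R c2 -> c1 = c2.
Proof.
wlog Hlt : c1 c2 / c1 < c2.
  move=> W H1 H2 Hl; case: (ltngtP c1 c2) => [H|H|//]; first exact: W.
  by apply/esym; apply: W.
move=> H1 H2 Hl.
have [Hm Hn] := low_mem (proj1 (andP H2)).
have [_ Hc2n _] := final_inv Hm.
have [_ HD] := final_props Hc2n.
by rewrite -Hl HD in Hm.
Qed.

Lemma sumc_split (M : mat) c0 T i :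
  sumc M T i = (odd (count_mem c0 T) && M i c0) (+) sumc M (filter (predC1 c0) T) i.
Proof.
rewrite /sumc; elim: T => [|x T IH]; first by rewrite !big_nil.
rewrite /= big_cons IH; case: eqP => [->|Hne] /=.
  rewrite add0n; set S := \big[_/_]_(_ <- _) _.
  by case: (odd _); case: (M i c0); case: S.
by rewrite big_cons add0n addbCA.
Qed.

Lemma sum_unique T : (forall c, c \in T -> hom R c) ->
  (forall c, c \in T -> sumc R T (lw R c) = false) -> forall i, sumc R T i = false.
Proof.
suff : forall b T, (forall c, c \in T -> hom R c /\ lw R c < b) ->
  (forall c, c \in T -> sumc R T (lw R c) = false) -> forall i, sumc R T i = false.
  move=> W HT; apply: (W n) => c Hc; split; first exact: HT.
  by have [] := low_mem (proj1 (andP (HT c Hc))).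
elim=> [|b IH] {}T HT Hv i.
  by case: T HT Hv => [|c T] HT; [rewrite /sumc big_nil | have [] := HT c (mem_head _ _)].
case: (boolP (has (fun c => lw R c == b) T)) => [/hasP [c0 Hc0 /eqP Hl0]|Hno]; last first.
  apply: IH => // c Hc; have [Hh Hl] := HT c Hc; split => //.
  rewrite ltn_neqAle -ltnS Hl andbT; apply/eqP => E.
  by move/hasPn: Hno => /(_ c Hc); rewrite E eqxx.
set T1 := filter (predC1 c0) T.
have HT1 : forall c, c \in T1 -> c \in T /\ c != c0.
  by move=> c; rewrite mem_filter /= => /andP [].
have [Hh0 _] := HT c0 Hc0.
have [Hm0 Hb] := low_mem (proj1 (andP Hh0)); rewrite Hl0 in Hm0 Hb.
have HT1b : forall c, c \in T1 -> hom R c /\ lw R c < b.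
  move=> c /HT1 [Hc Hne]; have [Hh Hl] := HT c Hc; split => //.
  rewrite ltn_neqAle -ltnS Hl andbT; apply/eqP => E.
  by move/eqP: Hne; apply; apply: final_distinct => //; rewrite E Hl0.
case Hodd: (odd (count_mem c0 T)).
  exfalso; have := Hv c0 Hc0; rewrite (sumc_split _ c0) Hodd Hl0 /= Hm0 /=.
  rewrite /sumc big1_seq; first done. move=> c /andP [_ Hc].
  have [Hh Hl] := HT1b c Hc.
  exact: (@low_above n R c b (proj1 (andP Hh))).
have E : forall i, sumc R T i = sumc R T1 i by move=> k; rewrite (sumc_split _ c0) Hodd.
rewrite E; apply: IH => // c Hc; rewrite -E; apply: Hv; exact: (HT1 c Hc).1.
Qed.

End Final.

End Run.

Section Cross.
Variables (V : finType) (d : Order.disp_t) (P : finPOrderType d) (m : {set V} -> P)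
  (K : {set {set V}}) (s t : seq {set V}).
Hypotheses (Hus : uniq s) (Hut : uniq t) (HKs : [set x in s] = K) (HKt : [set x in t] = K).
Hypothesis Hle : exists le : rel P, linear_extension le /\
  forall i j, i < size t -> j < size t -> (i <= j)%N -> le (m (nth set0 t i)) (m (nth set0 t j)).
Hypothesis Hmf : forall sigma tau, sigma \in K -> tau \in K -> m sigma = m tau ->
    (index sigma s < index tau s)%N = (index sigma t < index tau t)%N.

Local Notation n := (size s).
Local Notation pi i := (index (nth set0 s i) t).

Lemma memK x : x \in s -> x \in K.
Proof. by rewrite -HKs inE. Qed.

Lemma mem_st x : (x \in s) = (x \in t).
Proof.
have E : [set x in s] = [set x in t] by rewrite HKs HKt.
by have := congr1 (fun S : {set {set V}} => x \in S) E; rewrite !inE.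
Qed.

Lemma size_st : size t = n.
Proof. apply/esym/perm_size; apply: uniq_perm => // x; exact: mem_st. Qed.

Lemma pi_lt i : i < n -> pi i < n.
Proof. by move=> Hi; rewrite -size_st index_mem -mem_st mem_nth. Qed.

Lemma nth_pi i : i < n -> nth set0 t (pi i) = nth set0 s i.
Proof. by move=> Hi; rewrite nth_index // -mem_st mem_nth. Qed.

Lemma transfer c j : c < n -> j < n -> (m (nth set0 s c) <= m (nth set0 s j))%O -> c < j -> pi c < pi j.
Proof.
move=> Hc Hj Hm Hcj.
have HcK := memK (mem_nth set0 Hc); have HjK := memK (mem_nth set0 Hj).
case E: (m (nth set0 s c) == m (nth set0 s j)).
  by rewrite -Hmf //; [rewrite !index_uniq | exact/eqP].
rewrite ltnNge; apply/negP => Hge.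
have [le [[_ [Has [_ [_ Hmono0]]]] Hmono]] := Hle.
have Hjt : pi j < size t by rewrite size_st pi_lt.
have Hct : pi c < size t by rewrite size_st pi_lt.
have := Hmono _ _ Hjt Hct Hge; rewrite !nth_pi // => H1.
have H2 := Hmono0 _ _ Hm.
by move: E; rewrite (Has _ _ (introT andP (conj H2 H1))) eqxx.
Qed.

Lemma hom_transfer (M N : mat) j j' : Inv m n s M -> Inv m n t N -> j < n ->
  (forall i, i < n -> M i j = N (pi i) j') -> nth set0 t j' = nth set0 s j ->
  homogeneous n m s M j -> homogeneous n m t N j' /\ low n N j' = pi (low n M j).
Proof.
move=> HM HN Hj Hcol Hjj /andP [Hnz /eqP Hml].
have [HMl Hln] := low_mem Hnz.
set l := low n M j in HMl Hln Hml *.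
have HNl : N (pi l) j' by rewrite -Hcol.
have Hnz' : nonzero_col n N j' := nonzeroP HNl (pi_lt Hln).
have Hlow : low n N j' = pi l.
  apply/eqP; rewrite eqn_leq (low_max HNl (pi_lt Hln)) andbT.
  have [HNk Hkn] := low_mem Hnz'; set k := low n N j' in HNk Hkn *.
  have Hkt : nth set0 t k \in s by rewrite mem_st mem_nth // size_st.
  set i := index (nth set0 t k) s.
  have Hin : i < n by rewrite index_mem.
  have Hpi : pi i = k by rewrite nth_index // index_uniq // size_st.
  have HMi : M i j by rewrite Hcol // Hpi.
  have := low_max HMi Hin; rewrite -/l leq_eqVlt => /orP [/eqP <-|Hil].
    by rewrite Hpi.
  rewrite -Hpi ltnW // transfer //.
  by have [_ _ Hm] := HM _ _ HMi; rewrite -Hml.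
by split => //; rewrite /homogeneous Hnz' Hlow nth_pi // Hjj Hml eqxx.
Qed.

End Cross.

Lemma bd_inv (V : finType) (K : {set {set V}}) (Vs : {set {set {set V}}})
    (d : Order.disp_t) (P : finPOrderType d) (m : {set V} -> P) (s : seq {set V}) n :
  morse_decomposition K Vs m -> [set x in s] = K -> size s = n ->
  Inv m n s (boundary_matrix s).
Proof.
move=> Hmd HK Hn i j; rewrite /boundary_matrix Hn => /and3P [Hi Hj /andP [Hsub _]].
split => //.
have HjK : nth set0 s j \in K by rewrite -HK inE mem_nth ?Hn.
have HiK : nth set0 s i \in K by rewrite -HK inE mem_nth ?Hn.
have := Hmd (nth set0 s j) [:: nth set0 s i]; apply.
by rewrite /mv_path HjK /= andbT /Fmv inE /cl inE HiK Hsub orbT.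
Qed.

Section Main.
Variables (V : finType) (K : {set {set V}}) (Vs : {set {set {set V}}})
    (d : Order.disp_t) (P : finPOrderType d) (m : {set V} -> P)
    (s s' : seq {set V}).
Hypotheses (Hus : uniq s) (Hut : uniq s') (HKs : [set x in s] = K) (HKt : [set x in s'] = K).
Hypothesis Hles : exists le : rel P, linear_extension le /\
  forall i j, i < size s -> j < size s -> (i <= j)%N -> le (m (nth set0 s i)) (m (nth set0 s j)).
Hypothesis Hlet : exists le : rel P, linear_extension le /\
  forall i j, i < size s' -> j < size s' -> (i <= j)%N -> le (m (nth set0 s' i)) (m (nth set0 s' j)).
Hypothesis Hmf : forall sigma tau, sigma \in K -> tau \in K -> m sigma = m tau ->
    (index sigma s < index tau s)%N = (index sigma s' < index tau s')%N.
Hypothesis Hmd : morse_decomposition K Vs m.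

Let n := size s.
Let Hsz : size s' = n := size_st Hus Hut HKs HKt.
Let Hmf' : forall sigma tau, sigma \in K -> tau \in K -> m sigma = m tau ->
    (index sigma s' < index tau s')%N = (index sigma s < index tau s)%N.
Proof. by move=> *; rewrite Hmf. Qed.

Local Notation pi i := (index (nth set0 s i) s').
Local Notation pi' i := (index (nth set0 s' i) s).
Local Notation A := (boundary_matrix s).
Local Notation A' := (boundary_matrix s').
Local Notation R := (red_outer n m s A n).
Local Notation R' := (red_outer n m s' A' n).

Let HA : Inv m n s A := bd_inv Hmd HKs (erefl _).
Let HA' : Inv m n s' A' := bd_inv Hmd HKt Hsz.
Let HR : Inv m n s R := final_inv HA.
Let HR' : Inv m n s' R' := final_inv HA'.

Lemma piL i : i < n -> pi i < n. Proof. exact: (pi_lt Hus Hut HKs HKt). Qed.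
Lemma piL' i : i < n -> pi' i < n.
Proof. by move=> Hi; have := @pi_lt _ _ _ _ Hut Hus HKt HKs i; rewrite Hsz; apply. Qed.
Lemma nthpi i : i < n -> nth set0 s' (pi i) = nth set0 s i. Proof. exact: (nth_pi HKs HKt). Qed.
Lemma nthpi' i : i < n -> nth set0 s (pi' i) = nth set0 s' i.
Proof. by move=> Hi; apply: (nth_pi HKt HKs); rewrite Hsz. Qed.
Lemma pipi i : i < n -> pi' (pi i) = i.
Proof. by move=> Hi; rewrite nthpi // index_uniq. Qed.
Lemma pipi' i : i < n -> pi (pi' i) = i.
Proof. by move=> Hi; rewrite nthpi' // index_uniq // Hsz. Qed.

Lemma tr c j : c < n -> j < n -> (m (nth set0 s c) <= m (nth set0 s j))%O -> c < j -> pi c < pi j.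
Proof. exact: (transfer Hus Hut HKs HKt Hlet Hmf). Qed.
Lemma tr' c j : c < n -> j < n -> (m (nth set0 s' c) <= m (nth set0 s' j))%O -> c < j -> pi' c < pi' j.
Proof. by rewrite -Hsz; exact: (transfer Hut Hus HKt HKs Hles Hmf'). Qed.

Lemma bd_pi i j : i < n -> j < n -> A' (pi i) (pi j) = A i j.
Proof.
by move=> Hi Hj; rewrite /boundary_matrix Hsz !piL // !nthpi // Hi Hj.
Qed.

Lemma main j : j < n -> forall i, i < n -> R i j = R' (pi i) (pi j).
Proof.
elim/ltn_ind: j => j IH Hj.
set j' := pi j.
have Hj' : j' < n by apply: piL.
have [[T [HT HTs]] HD] := final_props HA Hj.
have [[T' [HT' HTs']] HD'] := final_props HA' Hj'.
have hom1 : forall c, c < j -> homogeneous n m s R c ->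
    homogeneous n m s' R' (pi c) /\ low n R' (pi c) = pi (low n R c).
  move=> c Hc Hh; have Hcn := ltn_trans Hc Hj.
  exact: (hom_transfer Hus Hut HKs HKt Hlet Hmf HR HR' Hcn (IH c Hc Hcn) (nthpi Hcn) Hh).
have back : forall c', c' \in T' -> [/\ pi' c' < j, pi (pi' c') = c',
    forall i, i < n -> R i (pi' c') = R' (pi i) c' & homogeneous n m s R (pi' c')].
  move=> c' Hc'; have [Hcj' Hh' Hm'] := HT' c' Hc'.
  have Hc'n := ltn_trans Hcj' Hj'.
  have Hlt : pi' c' < j by rewrite -(pipi Hj) tr'.
  have Hpp := pipi' Hc'n.
  have Hcol : forall i, i < n -> R i (pi' c') = R' (pi i) c'.
    by move=> i Hi; rewrite IH // ?piL' // Hpp.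
  split => //.
  have Hcol' : forall i, i < n -> R' i c' = R (pi' i) (pi' c').
    by move=> i Hi; rewrite Hcol ?piL' // pipi'.
  have := @hom_transfer _ _ _ m K s' s Hut Hus HKt HKs Hles Hmf' R' R c' (pi' c').
  rewrite Hsz => /(_ HR' HR Hc'n Hcol' (nthpi' Hc'n) Hh') [] //.
set U := T ++ map (fun c => pi' c) T'.
have Hsum : forall i, i < n -> R i j (+) R' (pi i) j' = sumc R U i.
  move=> i Hi; rewrite HTs HTs' /j' bd_pi // /sumc big_cat big_map /=.
  have -> : \big[addb/false]_(c <- T') R' (pi i) c = \big[addb/false]_(c <- T') R i (pi' c).
    by apply: eq_big_seq => c' Hc'; have [_ _ Hcc _] := back c' Hc'; rewrite Hcc.
  set x := A i j; set y := \big[_/_]_(_ <- T) _; set z := \big[_/_]_(_ <- T') _.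
  by case: x; case: y; case: z.
have HU : forall c, c \in U -> [/\ homogeneous n m s R c, c < j & pi c < j'].
  move=> c; rewrite mem_cat => /orP [Hc|/mapP [c' Hc' ->]].
    have [Hcj Hh Hm] := HT c Hc; split => //; apply: tr => //; exact: ltn_trans Hj.
  have [Hlt Hpp _ Hh] := back c' Hc'; split => //; rewrite Hpp.
  by have [] := HT' c' Hc'.
have Hvan : forall c, c \in U -> sumc R U (low n R c) = false.
  move=> c Hc; have [Hh Hcj Hpc] := HU c Hc.
  have [_ Hln] := low_mem (proj1 (andP Hh)).
  rewrite -Hsum // HD //.
  have [Hh' Hl'] := hom1 c Hcj Hh.
  by rewrite -Hl' HD'.
have HUh : forall c, c \in U -> homogeneous n m s R c by move=> c /HU [].
have Z := sum_unique HA HUh Hvan.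
move=> i Hi; have := Z i; rewrite -Hsum //.
by case: (R i j); case: (R' _ _).
Qed.

End Main.

Theorem proposition6 (V : finType) (K : {set {set V}})
    (Vs : {set {set {set V}}})
    (d : Order.disp_t) (P : finPOrderType d) (m : {set V} -> P)
    (s s' : seq {set V}) :
  simplicial_complex K ->
  multivector_field K Vs ->
  morse_decomposition K Vs m ->
  admissible K m s -> admissible K m s' ->
  morse_fixed K m s s' ->
  let n := size s in
  let Aout := conmat_reduce n m s (boundary_matrix s) in
  let A'out := conmat_reduce n m s' (boundary_matrix s') in
  (forall i j i' j', i < n -> j < n -> i' < n -> j' < n ->
     nth set0 s i = nth set0 s' i' -> nth set0 s j = nth set0 s' j' ->
     Aout i j = A'out i' j') /\
  (forall j l j' l', j < n -> l < n -> j' < n -> l' < n ->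
     homogeneous n m s Aout j -> low n Aout j = l ->
     nth set0 s' j' = nth set0 s j -> nth set0 s' l' = nth set0 s l ->
     homogeneous n m s' A'out j' /\ low n A'out j' = l').
Proof.
move=> _ _ Hmd [[Hus HKs] [Hles _]] [[Hut HKt] [Hlet _]] Hmf n Aout A'out.
have Hsz : size s' = n := size_st Hus Hut HKs HKt.
have HM := main Hus Hut HKs HKt Hles Hlet Hmf Hmd.
have Hidx : forall i i', i' < n -> nth set0 s i = nth set0 s' i' -> index (nth set0 s i) s' = i'.
  by move=> i i' Hi' ->; rewrite index_uniq // Hsz.
split.
  move=> i j i' j' Hi Hj Hi' Hj' Ei Ej.
  by rewrite /Aout /A'out /conmat_reduce HM // (Hidx i i') // (Hidx j j').
move=> j l j' l' Hj Hl Hj' Hl' Hh Hlow Ej El.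
have HA := bd_inv Hmd HKs (erefl _).
have HA' := bd_inv Hmd HKt Hsz.
have Hj'e : index (nth set0 s j) s' = j' by apply: Hidx.
have := @hom_transfer _ _ _ m K s s' Hus Hut HKs HKt Hlet Hmf
   (conmat_reduce n m s (boundary_matrix s)) (conmat_reduce n m s' (boundary_matrix s')) j j'
   (final_inv HA) (final_inv HA') Hj.
rewrite -Hj'e => /(_ (fun i Hi => HM j Hj i Hi) (nth_pi HKs HKt Hj) Hh) [H1 H2].
by split => //; rewrite H2 -/Aout Hlow; apply: Hidx.
Qed.
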